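(* For every integer $n\ge 0$, $$\Phi^{(4)}[aq^n; b; c, c'; x, y] = \sum_{k=0}^n \sum_{i=0}^k \begin{bmatrix} n \\ k \end{bmatrix} \begin{bmatrix} k \\ i \end{bmatrix} \frac{(b; q)_k}{(c; q)_{k-i} (c'; q)_i} q^{2\binom{k}{2}} a^k x^{k-i} y^i\, \Phi^{(4)}[aq^k; bq^k; cq^{k-i}, c'q^i; xq^i, y]$$ and $$\Phi^{(4)}[aq^{-n}; b; c, c'; x, y] = \sum_{k=0}^n \sum_{i=0}^k \begin{bmatrix} n \\ k \end{bmatrix} \begin{bmatrix} k \\ i \end{bmatrix} \frac{(b; q)_k}{(c; q)_{k-i} (c'; q)_i} q^{\binom{k}{2} - nk} (-a)^k x^{k-i} y^i\, \Phi^{(4)}[a; bq^k; cq^{k-i}, c'q^i; xq^i, y].$$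
   Context: Let $q$ be a complex number with $0<|q|<1$. For complex $z$ and integer $m\ge 0$, $(z;q)_m=\prod_{j=0}^{m-1}(1-zq^j)$, with $(z;q)_0=1$. For integers $0\le k\le n$, $\begin{bmatrix} n \\ k \end{bmatrix}=\frac{(q;q)_n}{(q;q)_k(q;q)_{n-k}}$ is the $q$-binomial coefficient. The $q$-Appell function $\Phi^{(4)}$ is $$\Phi^{(4)}[a; b; c, c'; x, y] = \sum_{m, n \geq 0} \frac{(a; q)_{m+n} (b; q)_{m+n}}{(q; q)_m (q; q)_n (c; q)_m (c'; q)_n} x^m y^n.$$ Identities are understood as identities of power series in $x,y$ (formal, or convergent for small $|x|,|y|$), with complex parameters chosen so that no denominator occurring vanishes. *)

(* Defs.v *)
From HB Require Import structures.
From mathcomp Require Import all_boot all_order all_algebra.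
From mathcomp Require Import reals.
From mathcomp Require Export complex.
Set Implicit Arguments. Unset Strict Implicit. Unset Printing Implicit Defensive.
Import Order.TTheory GRing.Theory Num.Theory.
Local Open Scope ring_scope.

Section Defs.
Variable (C : fieldType).

Definition qpoch (z q : C) (m : nat) : C := \prod_(j < m) (1 - z * q ^+ j).

Definition qbin (q : C) (n k : nat) : C :=
  qpoch q q n / (qpoch q q k * qpoch q q (n - k)).

(* Formal power series in two variables x, y : [f m n] is the coefficient
   of x^m y^n. *)
Definition fps := nat -> nat -> C.

(* substitution x |-> t * x *)
Definition fps_scalex (t : C) (f : fps) : fps := fun m n => t ^+ m * f m n.

(* multiplication by the monomial x^u y^v *)
Definition fps_mulmon (u v : nat) (f : fps) : fps :=
  fun m n => if (u <= m)%N && (v <= n)%N then f (m - u)%N (n - v)%N else 0.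

Definition Phi4 (q a b c c' : C) : fps := fun m n =>
  qpoch a q (m + n) * qpoch b q (m + n) /
  (qpoch q q m * qpoch q q n * qpoch c q m * qpoch c' q n).
End Defs.

(* Main.v *)
Require Import Defs.
From HB Require Import structures.
From mathcomp Require Import all_boot all_order all_algebra.
From mathcomp Require Import reals complex.
From mathcomp Require Import ring lra zify.
Import Order.TTheory GRing.Theory Num.Theory.
Local Open Scope ring_scope.

Section QS.
Variable F : fieldType.
Variable q : F.
Hypothesis hq0 : q != 0.
Hypothesis hq1 : forall j, q ^+ j.+1 != 1.

Definition ff (s k : nat) : F := \prod_(j < k) (1 - q ^+ (s - j)).
Local Notation qf := (qpoch q q).

Lemma qpoch_Sf z s : qpoch z q s.+1 = (1 - z) * qpoch (z * q) q s.
Proof.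
rewrite /qpoch big_ord_recl expr0 mulr1; congr (_ * _).
by apply: eq_bigr => j _; rewrite /bump /= exprS mulrA.
Qed.

Lemma qpoch_Sl z s : qpoch z q s.+1 = qpoch z q s * (1 - z * q ^+ s).
Proof. by rewrite /qpoch big_ord_recr. Qed.

Lemma qpoch_add z m n : qpoch z q (m + n) = qpoch z q m * qpoch (z * q ^+ m) q n.
Proof.
rewrite /qpoch big_split_ord; congr (_ * _).
by apply: eq_bigr => j _; rewrite exprD mulrA.
Qed.

Lemma ff_Sf s k : ff s.+1 k.+1 = (1 - q ^+ s.+1) * ff s k.
Proof.
by rewrite /ff big_ord_recl subn0.
Qed.

Lemma ff_Sl s k : ff s k.+1 = ff s k * (1 - q ^+ (s - k)).
Proof. by rewrite /ff big_ord_recr. Qed.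

Lemma ff0 s : ff s 0 = 1.
Proof. by rewrite /ff big_ord0. Qed.

Lemma ff_gt s k : (s < k)%N -> ff s k = 0.
Proof.
move=> h; rewrite /ff (bigD1 (Ordinal h)) //= subnn expr0 subrr mul0r //.
Qed.

Lemma qf_neq0 k : qf k != 0.
Proof.
rewrite /qpoch; apply/prodf_neq0 => j _.
by rewrite subr_eq0 eq_sym -exprS hq1.
Qed.

Lemma ff_qf s k : (k <= s)%N -> qf s = ff s k * qf (s - k).
Proof.
elim: k => [|k IH] h; first by rewrite ff0 mul1r subn0.
rewrite IH ?(ltnW h) // ff_Sl -mulrA; congr (_ * _).
have -> : (s - k = (s - k.+1).+1)%N by lia.
by rewrite qpoch_Sl mulrC -exprS -subSn // subSS.
Qed.

Lemma ff_neq0 s k : (k <= s)%N -> ff s k != 0.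
Proof.
move=> h; apply/eqP => e; move: (qf_neq0 s); rewrite (@ff_qf s k h) e mul0r.
by rewrite eqxx.
Qed.

Lemma qpow_eq a b c d : (a + b = c + d)%N -> q ^+ a = q ^+ c * q ^+ d / q ^+ b.
Proof.
move=> h; rewrite -exprD -h exprD mulfK //; exact: expf_neq0.
Qed.

Lemma pascal1 n k :
  ff n.+1 k.+1 = ff n k.+1 + q ^+ n / q ^+ k * (1 - q ^+ k.+1) * ff n k.
Proof.
rewrite ff_Sf ff_Sl.
case: (leqP k n) => h; last by rewrite ff_gt // !(mulr0, mul0r, addr0).
rewrite (@qpow_eq n.+1 0 (n-k) k.+1); last by lia.
rewrite (@qpow_eq n 0 (n-k) k); last by lia.
rewrite !expr0 !divr1 exprS.
field; exact: expf_neq0.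
Qed.

Lemma pascal2 n k :
  ff n.+1 k.+1 = q ^+ k.+1 * ff n k.+1 + (1 - q ^+ k.+1) * ff n k.
Proof.
rewrite ff_Sf ff_Sl.
case: (leqP k n) => h; last by rewrite ff_gt // !(mulr0, mul0r, addr0).
rewrite (@qpow_eq n.+1 0 (n-k) k.+1); last by lia.
rewrite !expr0 !divr1; ring.
Qed.


Lemma qf0 : qf 0 = 1.
Proof. by rewrite /qpoch big_ord0. Qed.

Lemma qpoch0 z : qpoch z q 0 = 1.
Proof. by rewrite /qpoch big_ord0. Qed.

Lemma qpoch_shift z s :
  qpoch (z * q) q s.+1 = qpoch z q s.+1 + z * (1 - q ^+ s.+1) * qpoch (z * q) q s.
Proof. rewrite (qpoch_Sl (z * q)) (qpoch_Sf z) exprS; ring. Qed.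

Lemma qf_S k : qf k.+1 = qf k * (1 - q ^+ k.+1).
Proof. by rewrite qpoch_Sl exprS. Qed.

Lemma one_sub_neq0 k : 1 - q ^+ k.+1 != 0.
Proof. by rewrite subr_eq0 eq_sym hq1. Qed.

Lemma E1 n : forall a s, qpoch (a * q ^+ n) q s =
  \sum_(k < n.+1) ff n k * ff s k / qf k *
     (q ^+ (2 * 'C(k, 2)) * a ^+ k * qpoch (a * q ^+ k) q (s - k)).
Proof.
elim: n => [|n IH] a s.
  by rewrite big_ord1 /= !ff0 qf0 !expr0 subn0 invr1 !mulr1 !mul1r.
case: s => [|s].
  rewrite qpoch0 big_ord_recl big1 => [|k _]; last first.
    by rewrite (@ff_gt 0 k.+1) // !(mulr0, mul0r).
  by rewrite /= !ff0 qf0 qpoch0 !expr0 !mulr1 divr1 addr0.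
have e1 : a * q ^+ n.+1 = (a * q ^+ n) * q by rewrite exprSr mulrA.
have e2 : a * q * q ^+ n = (a * q ^+ n) * q by rewrite mulrAC.
rewrite e1 qpoch_shift -e2 IH (IH (a * q)).
rewrite [RHS]big_ord_recl /=; symmetry.
under eq_bigr => i _ do rewrite (_ : bump 0 i = i.+1) // pascal1 !mulrDl.
rewrite big_split /= addrA; congr (_ + _).
  rewrite [in RHS]big_ord_recl big_ord_recr /= (@ff_gt n n.+1) //.
  rewrite !(mulr0, mul0r) addr0 !ff0 //.
rewrite mulr_sumr; apply: eq_bigr => k _.
rewrite ff_Sf qf_S subSS.
rewrite (@qpow_eq (2 * 'C(k.+1, 2)) 0 (2 * 'C(k, 2)) (k + k)); last first.
  by rewrite binS bin1; lia.
rewrite exprD exprMn expr0 divr1 exprS [a * (q * _)]mulrA.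
have := one_sub_neq0 k; rewrite exprS; have := qf_neq0 k; have := @expf_neq0 _ q k hq0.
move=> h1 h2 h3; rewrite (exprS a); field; by rewrite h1 h2 h3.
Qed.


Lemma E2 a n : forall s, qpoch (a / q ^+ n) q s =
  \sum_(k < n.+1) ff n k * ff s k / qf k *
     (q ^+ 'C(k, 2) / q ^+ (n * k) * (- a) ^+ k * qpoch a q (s - k)).
Proof.
have hqn : forall m, q ^+ m != 0 by move=> m; exact: expf_neq0.
elim: n => [|n IH] s.
  by rewrite big_ord1 /= !ff0 qf0 !expr0 subn0 invr1 !mulr1 !mul1r.
case: s => [|s].
  rewrite qpoch0 big_ord_recl big1 => [|k _]; last first.
    by rewrite (@ff_gt 0 k.+1) // !(mulr0, mul0r).
  by rewrite /= !ff0 qf0 qpoch0 !expr0 muln0 expr0 !invr1 !mulr1 addr0.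
have e1 : a / q ^+ n = (a / q ^+ n.+1) * q.
  by rewrite exprS; field; rewrite hq0 hqn.
have key := qpoch_shift (a / q ^+ n.+1) s.
rewrite -e1 in key.
have -> : qpoch (a / q ^+ n.+1) q s.+1 =
   qpoch (a / q ^+ n) q s.+1 - a / q ^+ n.+1 * (1 - q ^+ s.+1) * qpoch (a / q ^+ n) q s.
  by rewrite key addrK.
rewrite !IH.
rewrite [RHS]big_ord_recl /=; symmetry.
under eq_bigr => i _ do rewrite (_ : bump 0 i = i.+1) // pascal2 !mulrDl.
rewrite big_split /= addrA; congr (_ + _).
  rewrite [in RHS]big_ord_recl big_ord_recr /= (@ff_gt n n.+1) //.
  rewrite !(mulr0, mul0r) addr0 !ff0 !muln0; congr (_ + _).
  apply: eq_bigr => i _; rewrite (_ : bump 0 i = i.+1) // mulSn exprD.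
  by field; rewrite !hqn qf_neq0.
rewrite mulr_sumr -sumrN; apply: eq_bigr => k _.
rewrite ff_Sf qf_S subSS binS bin1 exprD (exprS (- a)) mulSn mulnS !exprD (exprS q n).
have h1 := one_sub_neq0 k; have h2 := qf_neq0 k.
rewrite exprS in h1; rewrite !exprS; field; by rewrite h1 h2 ?hqn hq0.
Qed.

Lemma V k : forall M N,
  \sum_(i < k.+1) ff k i / qf i * (q ^+ (i * (M + i)) / q ^+ (i * k))
     * ff M (k - i) * ff N i = ff (M + N) k.
Proof.
have hqn : forall m, q ^+ m != 0 by move=> m; exact: expf_neq0.
elim: k => [|k IH] M N.
  by rewrite big_ord1 /= !ff0 qf0 !mul0n !expr0 invr1 !mulr1.
case: M => [|M].
  rewrite big_ord_recr /= big1 => [|i _]; last first.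
    by rewrite (@ff_gt 0 (k.+1 - i)) ?subn_gt0 // !(mulr0, mul0r).
  have hs : ff k.+1 k.+1 = qf k.+1 by rewrite (@ff_qf k.+1 k.+1) // subnn qf0 mulr1.
  rewrite hs subnn ff0 add0r add0n; field; by rewrite hqn qf_neq0.
case: N => [|N].
  rewrite big_ord_recl big1 => [|i _]; last first.
    by rewrite /= (@ff_gt 0 (bump 0 i)) // !(mulr0, mul0r).
  by rewrite /= !ff0 qf0 !mul0n !expr0 invr1 !mulr1 subn0 addn0 addr0 mul1r.
transitivity ((1 - q ^+ M.+1) * ff (M + N.+1) k
   + q ^+ M.+1 * (1 - q ^+ N.+1) * ff (M.+1 + N) k); last first.
  rewrite addSnnS [in RHS]addSn ff_Sf.
  rewrite (_ : (M + N.+1).+1 = M.+1 + N.+1)%N // exprD; ring.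
rewrite -IH -IH.
rewrite big_ord_recl /=.
under eq_bigr => i _ do rewrite (_ : bump 0 i = i.+1) // pascal1 !mulrDl.
rewrite big_split /= addrA; congr (_ + _).
  rewrite mulr_sumr [in RHS]big_ord_recl big_ord_recr /= (@ff_gt k k.+1) //.
  rewrite !(mulr0, mul0r) addr0; congr (_ + _).
    by rewrite !ff0 qf0 !mul0n !expr0 !subn0 ff_Sf invr1; ring.
  apply: eq_bigr => i _; rewrite (_ : bump 0 i = i.+1) // subSS.
  have hi : (k - i = (k - i.+1).+1)%N by have := ltn_ord i; lia.
  rewrite hi ff_Sf.
  rewrite (_ : (i.+1 * (M.+1 + i.+1) = i.+1 * (M + i.+1) + i.+1)%N); last by ring.
  rewrite (_ : (i.+1 * k.+1 = i.+1 * k + i.+1)%N); last by ring.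
  rewrite !exprD; field; by rewrite !hqn qf_neq0.
rewrite mulr_sumr; apply: eq_bigr => i _.
rewrite ff_Sf qf_S subSS.
rewrite (@qpow_eq (i.+1 * (M.+1 + i.+1)) (k + i * k) (i * (M.+1 + i) + M.+1 + i) (i.+1 * k.+1)); last by ring.
rewrite !exprD.
have := one_sub_neq0 i; have := qf_neq0 i.
move=> h1 h2; field; by rewrite h1 h2 !hqn.
Qed.


Lemma qbinE n k : (k <= n)%N -> qbin q n k = ff n k / qf k.
Proof.
move=> h; rewrite /qbin (@ff_qf n k h).
have := qf_neq0 k; have := qf_neq0 (n - k); move=> h1 h2; field; by rewrite h1 h2.
Qed.

Lemma qpoch_neq0 z t m : (forall j, z * q ^+ j != 1) -> qpoch (z * q ^+ t) q m != 0.
Proof.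
move=> hz; rewrite /qpoch; apply/prodf_neq0 => j _.
by rewrite subr_eq0 eq_sym -mulrA -exprD hz.
Qed.

Lemma qpoch_neq0' z m : (forall j, z * q ^+ j != 1) -> qpoch z q m != 0.
Proof. by move=> hz; have := @qpoch_neq0 z 0 m hz; rewrite expr0 mulr1. Qed.

Lemma main_gen (a b c c' : F)
  (hc : forall j : nat, c * q ^+ j != 1)
  (hc' : forall j : nat, c' * q ^+ j != 1) :
  forall n : nat,
  (forall M N : nat,
    Phi4 q (a * q ^+ n) b c c' M N =
    \sum_(k < n.+1) \sum_(i < k.+1)
      (qbin q n k * qbin q k i * qpoch b q k
        / (qpoch c q (k - i) * qpoch c' q i)
        * q ^+ (2 * 'C(k, 2)) * a ^+ k)
      * fps_mulmon (k - i) i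
          (fps_scalex (q ^+ i)
             (Phi4 q (a * q ^+ k) (b * q ^+ k) (c * q ^+ (k - i)) (c' * q ^+ i)))
          M N)
  /\
  (forall M N : nat,
    Phi4 q (a * q ^- n) b c c' M N =
    \sum_(k < n.+1) \sum_(i < k.+1)
      (qbin q n k * qbin q k i * qpoch b q k
        / (qpoch c q (k - i) * qpoch c' q i)
        * (q ^+ 'C(k, 2) * q ^- (n * k)) * (- a) ^+ k)
      * fps_mulmon (k - i) i
          (fps_scalex (q ^+ i)
             (Phi4 q a (b * q ^+ k) (c * q ^+ (k - i)) (c' * q ^+ i)))
          M N).
Proof.
have hqn : forall m, q ^+ m != 0 by move=> m; exact: expf_neq0.
move=> n; split=> M N.
  have -> : Phi4 q (a * q ^+ n) b c c' M N = qpoch (a * q ^+ n) q (M + N)%N *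
     (qpoch b q (M + N)%N / (qf M * qf N * qpoch c q M * qpoch c' q N)).
    by rewrite /Phi4 mulrA.
  rewrite E1 mulr_suml; apply: eq_bigr => k _.
  rewrite -V mulr_sumr !mulr_suml; apply: eq_bigr => i _.
  have hk : (k <= n)%N by rewrite -ltnS ltn_ord.
  have hi : (i <= k)%N by rewrite -ltnS ltn_ord.
  rewrite /fps_mulmon /fps_scalex /Phi4.
  case: ifP => [/andP [h1 h2] | /negbT].
    rewrite (@qbinE n k hk) (@qbinE k i hi) -exprM.
    rewrite (@ff_qf M (k - i) h1) (@ff_qf N i h2).
    rewrite -[qpoch c q M](congr1 (qpoch c q) (subnKC h1)) (qpoch_add c).
    rewrite -[qpoch c' q N](congr1 (qpoch c' q) (subnKC h2)) (qpoch_add c').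
    have es : (M + N = k + (M - (k - i) + (N - i)))%N by lia.
    rewrite [qpoch b q _](_ : _ = qpoch b q k * qpoch (b * q ^+ k) q (M - (k - i) + (N - i))); last first.
      by rewrite -qpoch_add -es.
    rewrite [qpoch (a * q ^+ k) q _](_ : _ = qpoch (a * q ^+ k) q (M - (k - i) + (N - i))); last first.
      by rewrite es addKn.
    rewrite (_ : (M + i = (M - (k - i)) + k)%N); last by lia.
    rewrite mulnDr exprD.
    have := @ff_neq0 M (k - i) h1; have := @ff_neq0 N i h2.
    move=> n1 n2; field.
    by rewrite n1 n2 !qf_neq0 hqn !qpoch_neq0 ?qpoch_neq0'.
  rewrite negb_and -!ltnNge => /orP [] h.
    by rewrite (@ff_gt M (k - i) h) !(mulr0, mul0r).
  by rewrite (@ff_gt N i h) !(mulr0, mul0r).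
have -> : Phi4 q (a * q ^- n) b c c' M N = qpoch (a / q ^+ n) q (M + N)%N *
   (qpoch b q (M + N)%N / (qf M * qf N * qpoch c q M * qpoch c' q N)).
  by rewrite /Phi4 mulrA.
rewrite E2 mulr_suml; apply: eq_bigr => k _.
rewrite -V mulr_sumr !mulr_suml; apply: eq_bigr => i _.
have hk : (k <= n)%N by rewrite -ltnS ltn_ord.
have hi : (i <= k)%N by rewrite -ltnS ltn_ord.
rewrite /fps_mulmon /fps_scalex /Phi4.
case: ifP => [/andP [h1 h2] | /negbT].
  rewrite (@qbinE n k hk) (@qbinE k i hi) -exprM.
  rewrite (@ff_qf M (k - i) h1) (@ff_qf N i h2).
  rewrite -[qpoch c q M](congr1 (qpoch c q) (subnKC h1)) (qpoch_add c).
  rewrite -[qpoch c' q N](congr1 (qpoch c' q) (subnKC h2)) (qpoch_add c').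
  have es : (M + N = k + (M - (k - i) + (N - i)))%N by lia.
  rewrite [qpoch b q _](_ : _ = qpoch b q k * qpoch (b * q ^+ k) q (M - (k - i) + (N - i))); last first.
    by rewrite -qpoch_add -es.
  rewrite [qpoch a q _](_ : _ = qpoch a q (M - (k - i) + (N - i))); last first.
    by rewrite es addKn.
  rewrite (_ : (M + i = (M - (k - i)) + k)%N); last by lia.
  rewrite mulnDr exprD.
  have := @ff_neq0 M (k - i) h1; have := @ff_neq0 N i h2.
  move=> n1 n2; field.
  by rewrite n1 n2 !qf_neq0 !hqn !qpoch_neq0 ?qpoch_neq0'.
rewrite negb_and -!ltnNge => /orP [] h.
  by rewrite (@ff_gt M (k - i) h) !(mulr0, mul0r).
by rewrite (@ff_gt N i h) !(mulr0, mul0r).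
Qed.

End QS.

Local Open Scope complex_scope.

Theorem theorem15 (R : realType) (q a b c c' : R[i])
  (hq0 : 0 < `|q|) (hq1 : `|q| < 1)
  (hc : forall j : nat, c * q ^+ j != 1)
  (hc' : forall j : nat, c' * q ^+ j != 1) :
  forall n : nat,
  (forall M N : nat,
    Phi4 q (a * q ^+ n) b c c' M N =
    \sum_(k < n.+1) \sum_(i < k.+1)
      (qbin q n k * qbin q k i * qpoch b q k
        / (qpoch c q (k - i) * qpoch c' q i)
        * q ^+ (2 * 'C(k, 2)) * a ^+ k)
      * fps_mulmon (k - i) i
          (fps_scalex (q ^+ i)
             (Phi4 q (a * q ^+ k) (b * q ^+ k) (c * q ^+ (k - i)) (c' * q ^+ i)))
          M N)
  /\
  (forall M N : nat,
    Phi4 q (a * q ^- n) b c c' M N =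
    \sum_(k < n.+1) \sum_(i < k.+1)
      (qbin q n k * qbin q k i * qpoch b q k
        / (qpoch c q (k - i) * qpoch c' q i)
        * (q ^+ 'C(k, 2) * q ^- (n * k)) * (- a) ^+ k)
      * fps_mulmon (k - i) i
          (fps_scalex (q ^+ i)
             (Phi4 q a (b * q ^+ k) (c * q ^+ (k - i)) (c' * q ^+ i)))
          M N).
Proof.
have hq0' : q != 0 by rewrite -normr_gt0.
have hq1' : forall j, q ^+ j.+1 != 1.
  move=> j; apply/eqP => e.
  have : `|q ^+ j.+1| < 1 by rewrite normrX exprn_ilt1.
  by rewrite e normr1 ltxx.
exact: (@main_gen _ q hq0' hq1' a b c c' hc hc').
Qed.
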